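(* Let $Q$ be a real affine space modelled on a real vector space $V$ and let $f,f'\in A(Q)$, $n\in\mathbb N$. Suppose that for every $k\le n$ the multidirectional derivatives $\mathrm d^kf(q;w_1,\dots,w_k)$ and $\mathrm d^kf'(q;w_1,\dots,w_k)$ exist (for all $q\in Q$, $w_i\in V$). Then for all $q\in Q$ and $v_1,\dots,v_n\in V$, $$\mathrm d^n(ff')(q;v_1,\dots,v_n)=\sum_{\substack{(I,I')\\ I\cup I'=N,\ I\cap I'=\emptyset}}\mathrm d^{|I|}f(q;\mathbf v^I)\,\mathrm d^{|I'|}f'(q;\mathbf v^{I'}),$$ the sum running over ordered pairs of disjoint (possibly empty) subsets of $N=\{1,\dots,n\}$ with union $N$.
   Context: $A(Q)$: real functions on $Q$. For $I=\{i_1<\dots<i_m\}$, $\mathbf v^I=(v_{i_1},\dots,v_{i_m})$. The $k$-th polarization: $\delta^0f=f$ and for $k\ge1$, $\delta^kf(q;w_1,\dots,w_k)=(-1)^k\sum_{J\subset\{1,\dots,k\}}(-1)^{|J|}f(q+\sum_{j\in J}w_j)$ (the $J=\emptyset$ term is $f(q)$). The $k$-th multidirectional derivative is $\mathrm d^kf(q;w_1,\dots,w_k)=\lim_{s\to0}s^{-k}\delta^kf(q;sw_1,\dots,sw_k)$ when the limit exists; $\mathrm d^0f(q)=f(q)$. *)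

(* Defs.v *)
From HB Require Import structures.
From mathcomp Require Import all_boot all_order all_algebra.
From mathcomp Require Import all_classical all_reals topology normedtype.
Set Implicit Arguments. Unset Strict Implicit. Unset Printing Implicit Defensive.
Import Order.TTheory GRing.Theory Num.Theory.
Import numFieldNormedType.Exports.
Local Open Scope ring_scope.
Local Open Scope classical_set_scope.

(* Q is a real affine space modelled on V, via a free transitive action
   vadd : Q -> V -> Q  (written q + v in the paper). *)
Definition affine_action (R : realType) (V : lmodType R) (Q : Type)
  (vadd : Q -> V -> Q) : Prop :=
  (forall q, vadd q 0 = q) /\
  (forall q u w, vadd (vadd q u) w = vadd q (u + w)) /\
  (forall p q, exists v, vadd p v = q /\ forall v', vadd p v' = q -> v' = v).

Definition polar (R : realType) (V : lmodType R) (Q : Type)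
  (vadd : Q -> V -> Q) (k : nat) (f : Q -> R) (q : Q) (w : 'I_k -> V) : R :=
  if k == 0%N then f q else
  (-1) ^+ k * \sum_(J : {set 'I_k}) (-1) ^+ #|J| * f (vadd q (\sum_(j in J) w j)).
Arguments polar {R V Q} vadd k f q w.

Definition is_mdiff (R : realType) (V : lmodType R) (Q : Type)
  (vadd : Q -> V -> Q) (k : nat) (f : Q -> R) (q : Q) (w : 'I_k -> V) (l : R)
  : Prop :=
  if k == 0%N then l = f q else
  (fun s : R => s ^- k * polar vadd k f q (fun j => s *: w j)) x @[x --> 0^'] --> l.
Arguments is_mdiff {R V Q} vadd k f q w l.

(* the value of d^k f(q; w) (meaningful when it exists) *)
Definition mdiff (R : realType) (V : lmodType R) (Q : Type)
  (vadd : Q -> V -> Q) (k : nat) (f : Q -> R) (q : Q) (w : 'I_k -> V) : R :=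
  if k == 0%N then f q else
  lim ((fun s : R => s ^- k * polar vadd k f q (fun j => s *: w j)) x @[x --> 0^']).
Arguments mdiff {R V Q} vadd k f q w.

(* v^I : the subfamily of v indexed by I, in increasing order of indices *)
Definition vsub (V : Type) (n : nat) (v : 'I_n -> V) (I : {set 'I_n})
  : 'I_#|I| -> V := fun j => v (enum_val j).
Arguments vsub {V n} v I.

(* Main.v *)
Require Import Defs.
From HB Require Import structures.
From mathcomp Require Import all_boot all_order all_algebra.
From mathcomp Require Import all_classical all_reals topology normedtype.
Import Order.TTheory GRing.Theory Num.Theory.
Import numFieldNormedType.Exports.
Local Open Scope ring_scope.
Section Comb.
Variables (R : comNzRingType) (T : finType).

Lemma sum_set_prod (phi : T -> bool -> R) :
  \sum_(A : {set T}) \prod_i phi i (i \in A) = \prod_i (phi i true + phi i false).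
Proof.
have -> : \prod_i (phi i true + phi i false) = \prod_i \sum_(b : bool) phi i b.
  by apply: eq_bigr => i _; rewrite big_bool.
rewrite bigA_distr_bigA /=.
rewrite (reindex (fun f : {ffun T -> bool} => [set x | f x])) /=.
  by apply: eq_bigr => f _; apply: eq_bigr => i _; rewrite inE.
exists (fun A : {set T} => [ffun x => x \in A]) => [f _|A _].
  by apply/ffunP => x; rewrite ffunE inE.
by apply/setP => x; rewrite inE ffunE.
Qed.

Lemma sign2 (k : nat) : (-1) ^+ k * (-1) ^+ k = 1 :> R.
Proof. by rewrite -exprMn mulrNN mulr1 expr1n. Qed.

Lemma sumX (K J : {set T}) :
  \sum_(A : {set T} | (K \subset A) && (A \subset J)) (-1) ^+ #|A|
  = (K == J)%:R * (-1) ^+ #|K| :> R.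
Proof.
pose phi (i : T) (b : bool) : R :=
  if b then (if i \in J then -1 else 0) else (if i \in K then 0 else 1).
have E : forall A : {set T}, (if (K \subset A) && (A \subset J) then (-1) ^+ #|A| else 0)
   = \prod_i phi i (i \in A).
  move=> A; case: ifP => [/andP [KA AJ]|].
    rewrite -prodr_const big_mkcond /=; apply: eq_bigr => i _.
    rewrite /phi; case: ifP => iA.
      by rewrite (fintype.subsetP AJ i iA).
    by case: ifP => // iK; move: (fintype.subsetP KA i iK); rewrite iA.
  move/negbT; rewrite negb_and => /orP [/subsetPn [i iK iA]|/subsetPn [i iA iJ]].
    by rewrite (bigD1 i) //= /phi (negbTE iA) iK mul0r.
  by rewrite (bigD1 i) //= /phi iA (negbTE iJ) mul0r.
rewrite big_mkcond /=; under eq_bigr do rewrite E.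
rewrite sum_set_prod /phi.
case: eqP => [<-|/eqP KJ].
  rewrite mul1r -prodr_const [RHS]big_mkcond /=; apply: eq_bigr => i _.
  by case: ifP; rewrite ?addr0 ?add0r.
rewrite mul0r.
move: KJ; rewrite finset.eqEsubset negb_and => /orP [/subsetPn [i iK iJ]|/subsetPn [i iJ iK]].
  by rewrite (bigD1 i) //= (negbTE iJ) iK addr0 mul0r.
by rewrite (bigD1 i) //= iJ (negbTE iK) addNr mul0r.
Qed.

Definition PG (G : {set T} -> R) (A : {set T}) : R :=
  (-1) ^+ #|A| * \sum_(K : {set T} | K \subset A) (-1) ^+ #|K| * G K.

Lemma mobius (G : {set T} -> R) (J : {set T}) :
  G J = \sum_(A : {set T} | A \subset J) PG G A.
Proof.
rewrite /PG.
under eq_bigr do rewrite big_distrr /=.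
rewrite (exchange_big_dep predT) //=.
under eq_bigr => K _.
  have -> : \sum_(A : {set T} | (A \subset J) && (K \subset A))
      (-1) ^+ #|A| * ((-1) ^+ #|K| * G K)
    = ((-1) ^+ #|K| * G K) * \sum_(A : {set T} | (K \subset A) && (A \subset J)) (-1) ^+ #|A|.
    rewrite big_distrr /=; apply: eq_big => [A|A _]; first by rewrite andbC.
    by rewrite mulrC.
  rewrite sumX.
  over.
rewrite (bigD1 J) //= eqxx mul1r big1 ?addr0.
  by rewrite mulrC mulrA sign2 mul1r.
by move=> K /negbTE ->; rewrite !mul0r mulr0.
Qed.

Lemma prodform (G H : {set T} -> R) :
  (-1) ^+ #|T| * \sum_(J : {set T}) (-1) ^+ #|J| * (G J * H J)
  = \sum_(p : {set T} * {set T} | p.1 :|: p.2 == [set: T]%SET) PG G p.1 * PG H p.2.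
Proof.
under eq_bigr => J _ do rewrite [G J](mobius G) [H J](mobius H) big_distrlr /=
   pair_big_dep /= big_distrr big_mkcond /=.
rewrite exchange_big big_distrr [RHS]big_mkcond /=; apply: eq_bigr => p _.
have -> : \sum_(J : {set T})
    (if (p.1 \subset J) && (p.2 \subset J) then (-1) ^+ #|J| * (PG G p.1 * PG H p.2) else 0)
  = (\sum_(J : {set T} | (p.1 :|: p.2 \subset J) && (J \subset [set: T]%SET)) (-1) ^+ #|J|)
     * (PG G p.1 * PG H p.2).
  rewrite big_distrl /= [RHS]big_mkcond /=; apply: eq_bigr => J _.
  rewrite finset.subsetT andbT finset.subUset.
  by case: ifP; rewrite ?mulr0 ?mul0r.
rewrite sumX; case: eqP => [->|_]; last by rewrite !mul0r mulr0.
by rewrite mul1r cardsT mulrA sign2 mul1r.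
Qed.

End Comb.
Arguments sum_set_prod {R T}.
Arguments sumX {R T}.
Arguments PG {R T}.
Arguments mobius {R T}.
Arguments prodform {R T}.

Section Ana.
Local Open Scope classical_set_scope.

Lemma powcvg (R : realType) (m : nat) :
  (fun s : R => s ^+ m) x @[x --> 0^'] --> ((m == 0%N)%:R : R).
Proof.
elim: m => [|m IH] /=.
  under eq_cvg do rewrite expr0. exact: cvg_cst.
have H1 : (fun x : R => x) x @[x --> 0^'] --> (0:R).
  apply: cvg_within_filter; exact: cvg_id.
have E : (fun s:R => s ^+ m.+1) = (fun x => x) \* (fun x => x ^+ m).
  by apply: funext => x; rewrite exprS.
have H := cvgM H1 IH. rewrite mul0r in H. rewrite E. exact: H.
Qed.

Lemma sumcvg (R : realType) (I : finType) (P : pred I) (F : I -> R -> R) (l : I -> R) :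
  (forall i, P i -> F i x @[x --> 0^'] --> l i) ->
  (\sum_(i | P i) F i x) @[x --> 0^'] --> \sum_(i | P i) l i.
Proof.
move=> H; apply: cvg_big => //. exact: add_continuous.
Qed.

Lemma cvgM3 (R : realType) (f g h : R -> R) (a b c : R) :
  f x @[x --> 0^'] --> a -> g x @[x --> 0^'] --> b -> h x @[x --> 0^'] --> c ->
  (f x * g x * h x) @[x --> 0^'] --> a * b * c.
Proof.
move=> Hf Hg Hh. have H := cvgM (cvgM Hf Hg) Hh. exact: H.
Qed.

End Ana.

Section Main.
Local Open Scope classical_set_scope.
Variables (R : realType) (V : lmodType R) (Q : Type) (vadd : Q -> V -> Q).
Hypothesis H0 : forall q, vadd q 0 = q.

Lemma polarE k (g : Q -> R) q (w : 'I_k -> V) :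
  polar vadd k g q w =
  (-1) ^+ k * \sum_(J : {set 'I_k}) (-1) ^+ #|J| * g (vadd q (\sum_(j in J) w j)).
Proof.
rewrite /polar; case: k w => [|k] w /=; last by [].
rewrite (big_pred1 finset.set0).
  by rewrite big_set0 H0 cards0 !expr0 !mul1r.
move=> J /=; apply/esym/eqP/setP => -[i Hi] //.
Qed.

Lemma polarA n (g : Q -> R) q (w : 'I_n -> V) (A : {set 'I_n}) :
  polar vadd #|A| g q (vsub w A) =
  (-1) ^+ #|A| * \sum_(J : {set 'I_n} | J \subset A)
      (-1) ^+ #|J| * g (vadd q (\sum_(j in J) w j)).
Proof.
rewrite polarE; congr (_ * _).
pose h (J' : {set 'I_#|A|}) : {set 'I_n} := [set enum_val j | j in J']%SET.
have hinj : injective h by apply: imset_inj; exact: enum_val_inj.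
have -> : \sum_(J : {set 'I_n} | J \subset A)
      (-1) ^+ #|J| * g (vadd q (\sum_(j in J) w j))
    = \sum_(J in [set h J' | J' in [set: {set 'I_#|A|}]]%SET)
      (-1) ^+ #|J| * g (vadd q (\sum_(j in J) w j)).
  apply: eq_bigl => J; apply/idP/idP => [JA|/imsetP [J' _ ->]].
    apply/imsetP; exists [set j | enum_val j \in J]%SET; first by rewrite inE.
    apply/setP => x; apply/idP/imsetP => [xJ|[j]].
      have xA := fintype.subsetP JA x xJ.
      exists (enum_rank_in xA x); first by rewrite inE enum_rankK_in.
      by rewrite enum_rankK_in.
    by rewrite inE => jJ ->.
  by apply/fintype.subsetP => x /imsetP [j _ ->]; exact: enum_valP.
rewrite big_imset /=; last by move=> x y _ _; exact: hinj.
symmetry; apply: eq_big => [J'|J' _]; first by rewrite inE.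
rewrite /h card_imset; last exact: enum_val_inj.
rewrite big_imset //; move=> x y _ _; exact: enum_val_inj.
Qed.


Lemma FL (s : R) (n m a b : nat) (X Y : R) : s != 0 -> (a + b = n + m)%N ->
  s ^- n * (X * Y) = s ^+ m * (s ^- a * X) * (s ^- b * Y).
Proof.
move=> s0 H.
have E : s ^- a * s ^- b = s ^- n * s ^- m by rewrite -!invfM -!exprD H.
have -> : s ^+ m * (s ^- a * X) * (s ^- b * Y) = s ^+ m * (s ^- a * s ^- b) * (X * Y).
  by rewrite -!mulrA; congr (_ * _); rewrite mulrCA !mulrA [_ * X]mulrC -!mulrA.
rewrite E (mulrCA (s ^+ m)) mulfV ?mulr1 //; exact: expf_neq0.
Qed.

Lemma mainid n (f f' : Q -> R) q (v : 'I_n -> V) (s : R) : s != 0 ->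
 s ^- n * polar vadd n (fun x => f x * f' x) q (fun j => s *: v j) =
 \sum_(p : {set 'I_n} * {set 'I_n} | p.1 :|: p.2 == [set: 'I_n]%SET)
   s ^+ #|p.1 :&: p.2| * (s ^- #|p.1| * polar vadd #|p.1| f q (fun j => s *: vsub v p.1 j))
     * (s ^- #|p.2| * polar vadd #|p.2| f' q (fun j => s *: vsub v p.2 j)).
Proof.
move=> s0.
set w := fun j => s *: v j.
have Hp := prodform (fun J => f (vadd q (\sum_(j in J) w j))) (fun J => f' (vadd q (\sum_(j in J) w j))).
rewrite card_ord in Hp.
rewrite polarE Hp big_distrr /=; apply: eq_bigr => p /eqP Hu.
rewrite (_ : PG _ p.1 = polar vadd #|p.1| f q (vsub w p.1)); last by rewrite polarA.
rewrite (_ : PG _ p.2 = polar vadd #|p.2| f' q (vsub w p.2)); last by rewrite polarA.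
apply: FL => //.
by rewrite -cardsUI Hu cardsT card_ord.
Qed.

End Main.

Section Lim.
Local Open Scope classical_set_scope.
Lemma LIM (R : realType) (V : lmodType R) (Q : Type) (vadd : Q -> V -> Q)
  (g : Q -> R) n (Hg : forall k : nat, (k <= n)%N ->
     forall (q : Q) (w : 'I_k -> V), exists l, is_mdiff vadd k g q w l)
  k (kn : (k <= n)%N) q (w : 'I_k -> V) :
  (fun s : R => s ^- k * polar vadd k g q (fun j => s *: w j)) x @[x --> 0^']
     --> mdiff vadd k g q w.
Proof.
rewrite /mdiff; case: eqP => [k0|/eqP k0].
  subst k.
  have -> : (fun s : R => s ^- 0 * polar vadd 0 g q (fun j => s *: w j)) = (fun _ => g q).
    by apply: funext => s; rewrite expr0 invr1 mul1r.
  exact: cvg_cst.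
have [l Hl] := Hg k kn q w.
move: Hl; rewrite /is_mdiff (negbTE k0) => Hl.
by rewrite (cvg_lim _ Hl).
Qed.
End Lim.

Theorem theorem1 (R : realType) (V : lmodType R) (Q : Type)
  (vadd : Q -> V -> Q) (Haff : affine_action vadd)
  (f f' : Q -> R) (n : nat)
  (Hf : forall k : nat, (k <= n)%N ->
     forall (q : Q) (w : 'I_k -> V), exists l, is_mdiff vadd k f q w l)
  (Hf' : forall k : nat, (k <= n)%N ->
     forall (q : Q) (w : 'I_k -> V), exists l, is_mdiff vadd k f' q w l) :
  forall (q : Q) (v : 'I_n -> V),
    is_mdiff vadd n (fun x => f x * f' x) q v
      (\sum_(IJ : {set 'I_n} * {set 'I_n} |
               [disjoint IJ.1 & IJ.2] && (IJ.1 :|: IJ.2 == [set: 'I_n]))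
         mdiff vadd #|IJ.1| f q (vsub v IJ.1) *
         mdiff vadd #|IJ.2| f' q (vsub v IJ.2)).
Proof.
move=> q v.
case: Haff => H0 _.
have Hc : forall A : {set 'I_n}, (#|A| <= n)%N.
  by move=> A; move: (max_card (mem A)); rewrite card_ord.
have Hg := @sumcvg R _ (fun p : {set 'I_n} * {set 'I_n} => p.1 :|: p.2 == [set: 'I_n])
  (fun p s => s ^+ #|p.1 :&: p.2| * (s ^- #|p.1| * polar vadd #|p.1| f q (fun j => s *: vsub v p.1 j))
     * (s ^- #|p.2| * polar vadd #|p.2| f' q (fun j => s *: vsub v p.2 j)))
  (fun p => (#|p.1 :&: p.2| == 0%N)%:R * mdiff vadd #|p.1| f q (vsub v p.1) *
         mdiff vadd #|p.2| f' q (vsub v p.2)).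
have {}Hg := Hg (fun p _ => @cvgM3 R _ _ _ _ _ _ (powcvg R _) (@LIM R V Q vadd f n Hf _ (Hc p.1) q (vsub v p.1))
                  (@LIM R V Q vadd f' n Hf' _ (Hc p.2) q (vsub v p.2))).
have EL : \sum_(p : {set 'I_n} * {set 'I_n} | p.1 :|: p.2 == [set: 'I_n])
     (#|p.1 :&: p.2| == 0%N)%:R * mdiff vadd #|p.1| f q (vsub v p.1) *
         mdiff vadd #|p.2| f' q (vsub v p.2) =
   \sum_(IJ : {set 'I_n} * {set 'I_n} |
               [disjoint IJ.1 & IJ.2] && (IJ.1 :|: IJ.2 == [set: 'I_n]))
         mdiff vadd #|IJ.1| f q (vsub v IJ.1) *
         mdiff vadd #|IJ.2| f' q (vsub v IJ.2).
  rewrite [RHS]big_mkcond [LHS]big_mkcond; apply: eq_bigr => p _.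
  rewrite -setI_eq0 -cards_eq0.
  by case: (_ :|: _ == _); case: (_ == 0%N); rewrite ?mul1r ?mul0r ?andbF.
rewrite EL in Hg.
have CV : ((fun s : R => s ^- n * polar vadd n (fun x => f x * f' x) q (fun j => s *: v j))
   x @[x --> (0:R)^'] --> (\sum_(IJ : {set 'I_n} * {set 'I_n} |
               [disjoint IJ.1 & IJ.2] && (IJ.1 :|: IJ.2 == [set: 'I_n]%SET))
         mdiff vadd #|IJ.1| f q (vsub v IJ.1) *
         mdiff vadd #|IJ.2| f' q (vsub v IJ.2)))%classic.
  apply: cvg_trans Hg.
  apply: near_eq_cvg.
  have := nbhs_dnbhs_neq (0:R); apply: filterS => s s0.
  by rewrite mainid.
rewrite /is_mdiff; case: eqP => [n0|_]; last exact: CV.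
move: CV.
have -> : (fun s : R => s ^- n * polar vadd n (fun x => f x * f' x) q (fun j => s *: v j))
   = (fun _ => f q * f' q).
  by apply: funext => s; subst n; rewrite expr0 invr1 mul1r.
move/(cvg_lim _) => <-; [exact: lim_cst|exact: norm_hausdorff].
Qed.
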